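(* Let $n,d,k\in\mathbb{N}$, $\lambda,z\ge1$, $\beta\in(0,1]$ and $\xi\ge1$ such that $n\ge m$, where $m=k\cdot\lfloor 1+40^{z/2}\cdot2\xi/k\rfloor$. Let $\mathsf{M}\colon(\mathcal{B}_d)^n\to(\mathcal{B}_d)^{k+1}$ be a $(\lambda,\xi,\beta)$-approximation algorithm for $(k+1,z)$-clustering. Let $\widetilde{\mathsf{M}}\colon\{-1,1\}^{m\times d}\to\{-1,1\}^d$ be the mechanism that on input $x_1,\dots,x_m\in\{-1,1\}^d$ computes $(c_1,\dots,c_{k+1})=\mathsf{M}\big(\tfrac1{\sqrt d}x_1,\dots,\tfrac1{\sqrt d}x_m,\vec0,\dots,\vec0\big)$ (with $n-m$ copies of the zero vector), samples $j$ uniformly from $[k+1]$, and outputs $\mathrm{sign}(c_j)$. Then $\widetilde{\mathsf{M}}$ is $\left(k,\ \alpha=\frac1{160\cdot(2\lambda)^{2/z}},\ \frac{\beta}{k+1}\right)$-weakly-accurate.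
   Context: $\mathcal{B}_d=\{x\in\mathbb{R}^d:\|x\|_2\le1\}$. For $S\in(\mathcal{B}_d)^n$ and $C=(c_1,\dots,c_K)$, $\mathrm{COST}_z(C;S)=\sum_{x\in S}\min_{i\in[K]}\|x-c_i\|_2^z$ and $\mathrm{OPT}_{K,z}(S)=\min_{C\in(\mathbb{R}^d)^K}\mathrm{COST}_z(C;S)$. $\mathsf{M}$ is a $(\lambda,\xi,\beta)$-approximation algorithm for $(K,z)$-clustering if for every $S$, $\Pr_{C\sim\mathsf{M}(S)}[\mathrm{COST}_z(C;S)\le\lambda\mathrm{OPT}_{K,z}(S)+\xi]\ge\beta$. $\mathrm{sign}(u)=1$ if $u\ge0$ and $-1$ otherwise, coordinatewise. For a matrix $Z\in\{-1,1\}^{m'\times d}$ and $b\in\{-1,1\}$, $\mathcal{J}_Z^b$ is the set of columns all of whose entries equal $b$; $q$ strongly-agrees with $Z$ if $|\{j\in\mathcal{J}_Z^b:q^j=b\}|\ge0.9|\mathcal{J}_Z^b|$ for both $b$. A mechanism on $\{-1,1\}^{m\times d}$ ($k\mid m$) is $(k,\alpha,\beta')$-weakly-accurate if for every $X=(x_1,\dots,x_m)$ such that for all $t\in[k]$ and $b$, $|\mathcal{J}^b_{X_t}|\ge\frac12(1-\alpha)d$ with $X_t=(x_{(t-1)m/k+1},\dots,x_{tm/k})$, the probability that its output strongly-agrees with some $X_t$ is at least $\beta'$. *)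

(* Defs.v *)
From HB Require Import structures.
From mathcomp Require Import all_boot all_order all_algebra.
From mathcomp Require Import all_classical all_reals all_analysis.
Set Implicit Arguments. Unset Strict Implicit. Unset Printing Implicit Defensive.
Import Order.TTheory GRing.Theory Num.Theory.
Local Open Scope classical_set_scope.
Local Open Scope ring_scope.

Section Defs.
Variable R : realType.

Definition norm2 (d : nat) (x : 'rV[R]_d) : R := Num.sqrt (\sum_(i < d) x 0 i ^+ 2).

Definition in_ball (d : nat) (x : 'rV[R]_d) : Prop := norm2 x <= 1.

Definition point_cost (d K : nat) (z : R) (C : 'I_K.+1 -> 'rV[R]_d) (x : 'rV[R]_d) : R :=
  \big[Order.min/(norm2 (x - C ord0)) `^ z]_(j < K.+1) (norm2 (x - C j)) `^ z.

Definition cost (n d K : nat) (z : R) (C : 'I_K.+1 -> 'rV[R]_d) (S : 'I_n -> 'rV[R]_d) : R :=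
  \sum_(i < n) point_cost z C (S i).

Definition OPT (n d K : nat) (z : R) (S : 'I_n -> 'rV[R]_d) : R :=
  inf [set c | exists C : 'I_K.+1 -> 'rV[R]_d, c = cost z C S].

(* A randomized algorithm M : (B_d)^n -> (B_d)^{K+1} is modelled by its
   random seed w drawn from a probability space (Omega, P). *)
Definition approx_alg (d0 : measure_display) (Omega : measurableType d0)
  (P : probability Omega R) (n d K : nat)
  (M : ('I_n -> 'rV[R]_d) -> Omega -> 'I_K.+1 -> 'rV[R]_d)
  (lambda xi beta z : R) : Prop :=
  forall S : 'I_n -> 'rV[R]_d, (forall i, in_ball (S i)) ->
    (forall w j, in_ball (M S w j)) /\
    (forall (j : 'I_K.+1) (l : 'I_d), measurable_fun setT (fun w => M S w j 0 l)) /\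
    (beta%:E <= P [set w | (cost z (M S w) S <= lambda * OPT K z S + xi)%R])%E.

(* {-1,1} is encoded by bool: true <-> 1, false <-> -1 *)
Definition pm (b : bool) : R := if b then 1 else -1.
Definition sgnb (u : R) : bool := 0 <= u.

(* J^b of the t-th block X_t = (x_{t*(m/k)+1}, ..., x_{(t+1)*(m/k)}) (0-indexed t) *)
Definition blockJ (m d k : nat) (X : 'I_m -> 'I_d -> bool) (t : nat) (b : bool) : {set 'I_d} :=
  [set j : 'I_d | [forall i : 'I_m,
     ((t * (m %/ k) <= i) && (i < t.+1 * (m %/ k)))%N ==> (X i j == b)]].

Definition strongly_agrees (m d k : nat) (q : 'I_d -> bool) (X : 'I_m -> 'I_d -> bool) (t : nat) : Prop :=
  forall b : bool,
    (9 / 10 : R) * (#|blockJ k X t b|)%:R <= (#|[set j in blockJ k X t b | q j == b]|)%:R.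

(* A mechanism on {-1,1}^{m x d} with output in {-1,1}^d is given by the
   probabilities Pr X A = Pr[ output on X lies in A ].  (k, alpha, beta')-weak accuracy: *)
Definition weakly_accurate (m d k : nat)
  (Pr : ('I_m -> 'I_d -> bool) -> set ('I_d -> bool) -> \bar R) (alpha beta' : R) : Prop :=
  (k %| m)%N /\
  forall X : 'I_m -> 'I_d -> bool,
    (forall (t : 'I_k) (b : bool), (1 - alpha) / 2 * d%:R <= (#|blockJ k X t b|)%:R) ->
    (beta'%:E <= Pr X [set q | exists t : 'I_k, strongly_agrees k q X t])%E.

Definition embed_input (n m d : nat) (X : 'I_m -> 'I_d -> bool) : 'I_n -> 'rV[R]_d :=
  fun i => oapp (fun i' : 'I_m => (Num.sqrt (d%:R))^-1 *: \row_(l < d) pm (X i' l)) 0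
             (insub (val i) : option 'I_m).

Definition mech_tilde (d0 : measure_display) (Omega : measurableType d0)
  (P : probability Omega R) (n d K : nat)
  (M : ('I_n -> 'rV[R]_d) -> Omega -> 'I_K.+1 -> 'rV[R]_d) (m : nat)
  (X : 'I_m -> 'I_d -> bool) (A : set ('I_d -> bool)) : \bar R :=
  ((K.+1%:R)^-1)%:E *
    (\sum_(j < K.+1) P [set w | A (fun l => sgnb (M (@embed_input n m d X) w j 0%R l))])%E.

Definition m_of (k : nat) (z xi : R) : nat :=
  (k * Num.truncn (1 + 40 `^ (z / 2) * 2 * xi / k%:R))%N.

End Defs.

(* Main.v *)
Require Import Defs.
From HB Require Import structures.
From mathcomp Require Import all_boot all_order all_algebra.
From mathcomp Require Import all_classical all_reals all_analysis.
From mathcomp Require Import measurable_realfun.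
From mathcomp Require Import lra ring.
Import Order.TTheory GRing.Theory Num.Theory.
Local Open Scope ring_scope.
Lemma normz (R : realType) d (x : 'rV[R]_d) z :
  norm2 x `^ z = (\sum_(l < d) x 0 l ^+ 2) `^ (z / 2).
Proof.
rewrite /norm2 -powR12_sqrt ?sumr_ge0 // => [|l _]; last exact: sqr_ge0.
by rewrite -powRrM mulrC.
Qed.

Lemma meas_cost (R : realType) (d0 : measure_display) (Omega : measurableType d0)
  n d K (z : R) (f : Omega -> 'I_K.+1 -> 'rV[R]_d) (S : 'I_n -> 'rV[R]_d) :
  (forall j l, measurable_fun setT (fun w => f w j 0 l)) ->
  measurable_fun setT (fun w => cost z (f w) S).
Proof.
move=> mf; rewrite /cost; apply: measurable_sum => i; rewrite /point_cost.
set g := fun j w => norm2 (S i - f w j) `^ z.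
have mg : forall j, measurable_fun setT (g j).
  move=> j; rewrite /g.
  rewrite (_ : (fun w => _) = (fun w => (\sum_(l < d) (S i 0 l - f w j 0 l) ^+ 2) `^ (z / 2))); last first.
    by apply: funext => w; rewrite normz; congr (_ `^ _); apply: eq_bigr => l _; rewrite !mxE.
  apply: (measurableT_comp (measurable_powR _)).
  apply: measurable_sum => l; apply: measurable_funX; apply: measurable_funB => //.
suff H : forall s, measurable_fun setT (fun w => \big[Order.min/g ord0 w]_(j <- s) g j w).
  exact: (H (index_enum _)).
elim=> [|a s IH].
  under eq_fun do rewrite big_nil; exact: mg.
under eq_fun do rewrite big_cons.
exact: measurable_minr.
Qed.
Lemma embed_lt (R : realType) n m d (X : 'I_m -> 'I_d -> bool) (i : 'I_n) (h : (i < m)%N) :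
  @embed_input R n m d X i = (Num.sqrt (d%:R))^-1 *: \row_(l < d) pm R (X (Ordinal h) l).
Proof. by rewrite /embed_input insubT /=. Qed.

Lemma embed_ge (R : realType) n m d (X : 'I_m -> 'I_d -> bool) (i : 'I_n) :
  ~~ (i < m)%N -> @embed_input R n m d X i = 0.
Proof. by move=> h; rewrite /embed_input insubF /= ?(negbTE h). Qed.

Lemma pm_sq (R : realType) b : pm R b ^+ 2 = 1.
Proof. by case: b; rewrite /pm ?expr1n ?sqrrN ?expr1n. Qed.

Lemma inv_sqrt_sq (R : realType) d : (Num.sqrt (d%:R : R))^-1 ^+ 2 = (d%:R)^-1.
Proof. by rewrite exprVn sqr_sqrtr. Qed.

Lemma embed_ball (R : realType) n m d (X : 'I_m -> 'I_d -> bool) (i : 'I_n) :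
  in_ball (@embed_input R n m d X i).
Proof.
rewrite /in_ball /norm2.
case: (ltnP i m) => h.
  rewrite embed_lt.
  rewrite (eq_bigr (fun _ => (d%:R : R)^-1)); last first.
    by move=> l _; rewrite !mxE exprMn pm_sq mulr1 inv_sqrt_sq.
  rewrite sumr_const card_ord.
  case: d X => [|d] X; first by rewrite mulr0n sqrtr0.
  by rewrite (_ : (d.+1%:R : R)^-1 *+ d.+1 = 1) ?sqrtr1 // -[RHS](@mulVf _ (d.+1%:R)) ?pnatr_eq0 // mulr_natr.
rewrite embed_ge -?ltnNge //.
by rewrite big1 ?sqrtr0 // => l _; rewrite mxE expr0n.
Qed.
Lemma inJ {m d k} {X : 'I_m -> 'I_d -> bool} {t b} {i : 'I_m} {l} :
  (t * (m %/ k) <= i)%N -> (i < t.+1 * (m %/ k))%N ->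
  l \in blockJ k X t b -> X i l = b.
Proof.
move=> h1 h2; rewrite inE => /forallP /(_ i) /implyP.
by rewrite h1 h2 => /(_ isT) /eqP.
Qed.

Lemma lb_point (R : realType) m d k (X : 'I_m -> 'I_d -> bool) t (i : 'I_m)
  (c : 'rV[R]_d) (alpha : R) :
  (0 < d)%N -> alpha <= 1/2 ->
  (t * (m %/ k) <= i)%N -> (i < t.+1 * (m %/ k))%N ->
  (forall b, (1 - alpha) / 2 * d%:R <= (#|blockJ k X t b|)%:R) ->
  ~ strongly_agrees R k (fun l => sgnb (c 0 l)) X t ->
  1/40 <= \sum_(l < d) ((Num.sqrt d%:R)^-1 * pm R (X i l) - c 0 l) ^+ 2.
Proof.
move=> d0 ha h1 h2 hJ /existsNP [b /negP]; rewrite -ltNge => hb.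
set J := blockJ k X t b in hb.
set D := J :\: [set l | sgnb (c 0 l) == b].
have hE : [set j in J | sgnb (c 0 j) == b] = J :&: [set l | sgnb (c 0 l) == b].
  by apply/setP => l; rewrite !inE.
have hc := cardsID [set l | sgnb (c 0 l) == b] J.
have hD : (#|D|%:R : R) = #|J|%:R - #|[set j in J | sgnb (c 0 j) == b]|%:R.
  by rewrite hE -hc natrD addrAC subrr add0r.
have dpos : (0 : R) < d%:R by rewrite ltr0n.
have hD2 : (d%:R : R) / 40 <= #|D|%:R.
  rewrite hD; have := hJ b; rewrite -/J => hJb.
  have hJ0 : (0 : R) <= #|J|%:R by [].
  nra.
rewrite (bigID (mem D)) /=.
rewrite -[X in X <= _]addr0; apply: lerD; last by apply: sumr_ge0 => l _; exact: sqr_ge0.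
apply: le_trans (_ : \sum_(l in D) (d%:R : R)^-1 <= _).
  rewrite sumr_const -(mulr_natl (d%:R^-1) #|D|) mulrC ler_pdivlMr //.
  lra.
apply: ler_sum => l; rewrite inE => /andP [lnE lJ].
rewrite (inJ h1 h2 lJ).
rewrite inE in lnE.
have sp : 0 < (Num.sqrt (d%:R : R))^-1 by rewrite invr_gt0 sqrtr_gt0.
have hxc : (Num.sqrt d%:R)^-1 * pm R b * c 0 l <= 0.
  rewrite /pm; move: lnE; rewrite /sgnb.
  case: b {hb J D hE hc hD hD2 lJ} => /=.
    rewrite eqb_id -ltNge => hlt; rewrite mulr1; nra.
  rewrite mulrN1 eqbF_neg negbK => hge; nra.
set x := (Num.sqrt d%:R)^-1 * pm R b in hxc *.
have hx : x ^+ 2 = (d%:R)^-1 by rewrite /x exprMn pm_sq mulr1 inv_sqrt_sq.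
rewrite -hx; nra.
Qed.
Definition ev (R : realType) {m d} k (X : 'I_m -> 'I_d -> bool) (t : nat) (l : 'I_d) : R :=
  if l \in blockJ k X t true then 1 else if l \in blockJ k X t false then -1 else 0.

Lemma ub_point (R : realType) m d k (X : 'I_m -> 'I_d -> bool) t (i : 'I_m) (alpha : R) :
  (0 < d)%N ->
  (t * (m %/ k) <= i)%N -> (i < t.+1 * (m %/ k))%N ->
  (forall b, (1 - alpha) / 2 * d%:R <= (#|blockJ k X t b|)%:R) ->
  \sum_(l < d) ((Num.sqrt d%:R)^-1 * pm R (X i l) - (Num.sqrt d%:R)^-1 * ev R k X t l) ^+ 2
    <= alpha.
Proof.
move=> d0 h1 h2 hJ.
set J1 := blockJ k X t true; set J0 := blockJ k X t false.
set U := J1 :|: J0.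
rewrite (eq_bigr (fun l => if l \in ~: U then (d%:R : R)^-1 else 0)); last first.
  move=> l _; rewrite /ev -/J1 -/J0 finset.in_setC finset.in_setU.
  case: ifP => [l1|_].
    by rewrite (inJ h1 h2 l1) subrr expr0n.
  case: ifP => [l0|_] /=.
    by rewrite (inJ h1 h2 l0) subrr expr0n.
  by rewrite mulr0 subr0 exprMn pm_sq mulr1 inv_sqrt_sq.
rewrite -big_mkcond /= sumr_const.
have hdis : J1 :&: J0 = finset.set0.
  apply/setP => l; rewrite finset.in_set0 finset.in_setI; apply/negP => /andP [l1 l0].
  by have := inJ h1 h2 l1; rewrite (inJ h1 h2 l0).
have hU := cardsUI J1 J0; rewrite hdis cards0 addn0 -/U in hU.
have hC := cardsC U; rewrite card_ord hU in hC.
have hCR : (#|~: U|%:R : R) = d%:R - #|J1|%:R - #|J0|%:R.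
  by have := congr1 (fun n => n%:R : R) hC; rewrite /= !natrD; lra.
rewrite -(mulr_natl (d%:R^-1) #|~: U|) hCR ler_pdivrMr ?ltr0n //.
have := hJ true; have := hJ false; rewrite -/J1 -/J0; lra.
Qed.
Lemma powRV (R : realType) (x r : R) : 0 <= x -> (x^-1) `^ r = (x `^ r)^-1.
Proof. by move=> x0; rewrite -powR_inv1 // -powRrM mulN1r powRN. Qed.

Lemma arith1 (R : realType) (lambda z : R) : 1 <= lambda -> 1 <= z ->
  lambda * ((160 * (2 * lambda) `^ (2 / z))^-1) `^ (z / 2) <= (1 / 40) `^ (z / 2) / 2.
Proof.
move=> hl hz.
have z0 : z != 0 by apply/eqP => z0; rewrite z0 in hz; lra.
have w0 : 0 <= (2 * lambda) `^ (2 / z) by apply: powR_ge0.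
rewrite powRV ?mulr_ge0 // powRM // -powRrM.
rewrite (_ : 2 / z * (z / 2) = 1); last by field; rewrite z0.
rewrite powRr1; last by lra.
rewrite div1r powRV //.
set a := 40 `^ (z / 2); set b := 160 `^ (z / 2).
have a0 : 0 < a by apply: powR_gt0.
have ab : a <= b.
  by rewrite /a /b; apply: ge0_ler_powR; rewrite ?nnegrE //; lra.
have b0 : 0 < b by lra.
have l0 : 0 < lambda by lra.
rewrite (_ : lambda / (b * (2 * lambda)) = (2 * b)^-1); last first.
  by field; apply/andP; split; apply/lt0r_neq0 => //; lra.
rewrite (_ : a^-1 / 2 = (2 * a)^-1); last by field; apply/lt0r_neq0.
rewrite lef_pV2 ?posrE; lra.
Qed.

Lemma arith2 (R : realType) (k : nat) (z xi : R) : (0 < k)%N -> 1 <= xi ->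
  xi * 2 < (m_of k z xi)%:R * (1 / 40) `^ (z / 2).
Proof.
move=> k0 hxi; rewrite /m_of.
set a := 40 `^ (z / 2).
have a0 : 0 < a by apply: powR_gt0.
have k0R : (0 : R) < k%:R by rewrite ltr0n.
set y := a * 2 * xi / k%:R.
have := truncnS_gt (1 + y); rewrite -addn1 natrD => hT.
have hy : y < (Num.truncn (1 + y))%:R by lra.
rewrite div1r powRV; last by [].
rewrite -/a natrM.
have : k%:R * y < k%:R * (Num.truncn (1 + y))%:R by rewrite ltr_pM2l.
have hky : k%:R * y = a * 2 * xi by rewrite /y; field; apply/lt0r_neq0.
rewrite hky => h.
rewrite ltr_pdivlMr //; lra.
Qed.
Lemma in_bigsetU {I : eqType} {T : Type} (s : seq I) (P : pred I) (F : I -> set T) x :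
  (\big[setU/set0]_(i <- s | P i) F i)%classic x <-> exists i, [/\ i \in s, P i & F i x].
Proof.
elim: s => [|a s IH]; first by rewrite big_nil; split => // [[i []]].
rewrite big_cons; case: ifP => Pa.
  split.
    case => [Fa|/IH [i [i1 i2 i3]]]; first by exists a; rewrite mem_head.
    by exists i; rewrite in_cons i1 orbT.
  move=> [i [] ]; rewrite in_cons => /orP [/eqP -> _ Fa|iis Pi Fi]; first by left.
  by right; apply/IH; exists i.
split.
  by move=> /IH [i [i1 i2 i3]]; exists i; rewrite in_cons i1 orbT.
move=> [i [] ]; rewrite in_cons => /orP [/eqP -> |iis Pi Fi]; first by rewrite Pa.
by apply/IH; exists i.
Qed.

Lemma in_bigsetI {I : eqType} {T : Type} (s : seq I) (F : I -> set T) x :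
  (\big[setI/setT]_(i <- s) F i)%classic x <-> forall i, i \in s -> F i x.
Proof.
elim: s => [|a s IH]; first by rewrite big_nil; split.
rewrite big_cons; split.
  move=> [Fa /IH H] i; rewrite in_cons => /orP [/eqP -> //|]; exact: H.
move=> H; split; first by apply: H; rewrite mem_head.
by apply/IH => i iis; apply: H; rewrite in_cons iis orbT.
Qed.

Lemma meas_sgn (R : realType) (d0 : measure_display) (Omega : measurableType d0) d
  (f : 'I_d -> Omega -> R) (A : set ('I_d -> bool)) :
  (forall l, measurable_fun setT (f l)) ->
  measurable [set w | A (fun l => sgnb (f l w))]%classic.
Proof.
move=> mf.
have -> : [set w | A (fun l => sgnb (f l w))]%classic =
  (\big[setU/set0]_(q <- enum {ffun 'I_d -> bool} | `[< A q >])
     \big[setI/setT]_(l <- enum 'I_d) ((fun w => sgnb (f l w)) @^-1` [set q l]))%classic.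
  apply/seteqP; split => w /=.
    move=> Aw; apply/in_bigsetU; exists [ffun l => sgnb (f l w)]; split.
    - by rewrite mem_enum.
    - apply/asboolP.
      suff E : (fun l => sgnb (f l w)) = [ffun l => sgnb (f l w)] :> ('I_d -> bool) by rewrite -E.
      by apply: funext => l; rewrite ffunE.
    - by apply/in_bigsetI => l _ /=; rewrite ffunE.
  move=> /in_bigsetU [q [_ /asboolP Aq /in_bigsetI H]].
  suff E : (fun l => sgnb (f l w)) = q :> ('I_d -> bool) by rewrite E.
  by apply: funext => l; have := H l; rewrite mem_enum => /(_ isT).
apply: bigsetU_measurable => q _; apply: bigsetI_measurable => l _.
have mb : measurable_fun setT (fun w => sgnb (f l w)).
  by apply: measurable_fun_ler => //; exact: measurable_cst.
by rewrite -[X in measurable X]setTI; apply: mb.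
Qed.

Lemma card0 (A : {set 'I_0}) : #|A| = 0%N.
Proof. by apply/eqP; rewrite -leqn0; apply: leq_trans (max_card _) _; rewrite card_ord. Qed.

Lemma det (R : realType) n d k (z lambda xi : R)
  (X : 'I_(m_of k z xi) -> 'I_d -> bool) (C : 'I_k.+1 -> 'rV[R]_d) :
  (0 < k)%N -> 1 <= lambda -> 1 <= z -> 1 <= xi -> (m_of k z xi <= n)%N ->
  (forall (t : 'I_k) (b : bool),
     (1 - (160 * (2 * lambda) `^ (2 / z))^-1) / 2 * d%:R <= (#|blockJ k X t b|)%:R) ->
  cost z C (@embed_input R n _ d X) <= lambda * OPT k z (@embed_input R n _ d X) + xi ->
  exists j : 'I_k.+1, exists t : 'I_k, strongly_agrees R k (fun l => sgnb (C j 0 l)) X t.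
Proof.
move=> k0 hl hz hxi hmn hX hcost.
case: d X C hX hcost => [|d] X C hX hcost.
  exists ord0, (Ordinal k0) => b; rewrite !card0 mulr0; exact: lexx.
set S := @embed_input R n _ d.+1 X in hcost *.
set alpha := (160 * (2 * lambda) `^ (2 / z))^-1 in hX.
set m := m_of k z xi in hmn *.
set T0 := Num.truncn (1 + 40 `^ (z / 2) * 2 * xi / k%:R).
have mE : m = (k * T0)%N by [].
have y0 : 0 <= 40 `^ (z / 2) * 2 * xi / k%:R.
  by rewrite divr_ge0 // !mulr_ge0 ?powR_ge0 //; lra.
have T0pos : (0 < T0)%N by rewrite truncn_gt0; lra.
have mdk : (m %/ k)%N = T0 by rewrite mE mulKn.
have hblk : forall i : nat, (i < m)%N ->
    [/\ (i %/ T0 < k)%N, (i %/ T0 * (m %/ k) <= i)%N & (i < (i %/ T0).+1 * (m %/ k))%N].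
  move=> i him; rewrite mdk; split.
  - by rewrite ltn_divLR // -mE.
  - exact: leq_trunc_div.
  - exact: ltn_ceil.
have d0 : (0 < d.+1)%N by [].
have w1 : 1 <= (2 * lambda) `^ (2 / z).
  have h2 : 1 <= 2 * lambda by lra.
  have := @ler_powR R (2 * lambda) h2 0 (2 / z); rewrite powRr0; apply.
  by rewrite divr_ge0 //; lra.
have a0 : 0 <= alpha by rewrite /alpha invr_ge0 mulr_ge0 //; lra.
have ah : alpha <= 1 / 2.
  by rewrite /alpha div1r lef_pV2 ?posrE; [nra | nra | lra].
set L := (1 / 40 : R) `^ (z / 2).
set U := alpha `^ (z / 2).
have z2 : 0 <= z / 2 by rewrite divr_ge0 //; lra.
apply: contrapT => Hn.
have H : forall (j : 'I_k.+1) (t : 'I_k), ~ strongly_agrees R k (fun l => sgnb (C j 0 l)) X t.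
  by move=> j t hs; apply: Hn; exists j, t.
have low : m%:R * L <= cost z C S.
  rewrite /cost.
  apply: le_trans (_ : \sum_(i < n) (if (i < m)%N then L else 0) <= _).
    rewrite -big_mkcond /= -(big_ord_widen n (fun _ => L) hmn) sumr_const card_ord mulr_natl.
    exact: lexx.
  apply: ler_sum => i _; case: ifP => him; last first.
    rewrite /point_cost; apply: le_bigmin => [|j _]; exact: powR_ge0.
  have [tk hb1 hb2] := hblk i him.
  have key : forall j, L <= norm2 (S i - C j) `^ z.
    move=> j; rewrite normz.
    rewrite (eq_bigr (fun l => ((Num.sqrt d.+1%:R)^-1 * pm R (X (Ordinal him) l) - C j 0 l) ^+ 2)); last first.
      by move=> l _; rewrite /S embed_lt !mxE.
    apply: ge0_ler_powR => //; rewrite ?nnegrE.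
    - by [].
    - by apply: sumr_ge0 => l _; exact: sqr_ge0.
    exact: (@lb_point R _ _ k X (i %/ T0) (Ordinal him) (C j) alpha d0 ah hb1 hb2
               (fun b => hX (Ordinal tk) b) (H j (Ordinal tk))).
  rewrite /point_cost; apply: le_bigmin => [|j _]; exact: key.
have cge0 : forall C' : 'I_k.+1 -> 'rV[R]_d.+1, 0 <= cost z C' S.
  move=> C'; rewrite /cost; apply: sumr_ge0 => i _; rewrite /point_cost; apply: le_bigmin => [|j _]; exact: powR_ge0.
have up : OPT k z S <= m%:R * U.
  have hlb : has_lbound [set c | exists C' : 'I_k.+1 -> 'rV[R]_d.+1, c = cost z C' S].
    by exists 0 => c [C' ->]; exact: cge0.
  pose Cs : 'I_k.+1 -> 'rV[R]_d.+1 := fun j => if (j < k)%N then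
      (Num.sqrt d.+1%:R)^-1 *: \row_(l < d.+1) ev R k X j l else 0.
  apply: le_trans ((ge_inf hlb) (cost z Cs S) (ex_intro _ Cs erefl)) _.
  rewrite /cost.
  apply: le_trans (_ : _ <= \sum_(i < n) (if (i < m)%N then U else 0)) _; last first.
    rewrite -big_mkcond /= -(big_ord_widen n (fun _ => U) hmn) sumr_const card_ord mulr_natl.
    exact: lexx.
  apply: ler_sum => i _; case: ifP => him.
    have [tk hb1 hb2] := hblk i him.
    rewrite /point_cost; apply: le_trans (bigmin_le _ (inord (i %/ T0) : 'I_k.+1) _) _.
    have tk1 : (i %/ T0 < k.+1)%N by apply: ltnW.
    rewrite /Cs inordK // tk normz.
    rewrite (eq_bigr (fun l => ((Num.sqrt d.+1%:R)^-1 * pm R (X (Ordinal him) l)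
       - (Num.sqrt d.+1%:R)^-1 * ev R k X (i %/ T0) l) ^+ 2)); last first.
      by move=> l _; rewrite /S embed_lt !mxE.
    apply: ge0_ler_powR => //; rewrite ?nnegrE //.
    - by apply: sumr_ge0 => l _; exact: sqr_ge0.
    exact: (@ub_point R _ _ k X (i %/ T0) (Ordinal him) alpha d0 hb1 hb2
               (fun b => hX (Ordinal tk) b)).
  rewrite /point_cost; apply: le_trans (bigmin_le _ (ord_max : 'I_k.+1) _) _.
  rewrite /Cs /= ltnn /S embed_ge ?him // subr0 normz big1 ?powR0 //.
    by apply/eqP => h; rewrite h in z2; move: hz; rewrite -[z](@divfK _ 2) ?h ?mul0r //; lra.
  by move=> l _; rewrite mxE expr0n.
have A1 := @arith1 R _ _ hl hz.
have A2 := @arith2 R _ z _ k0 hxi.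
rewrite -/m -/L in A2; rewrite -/alpha -/U -/L in A1.
have l0 : 0 <= lambda by lra.
have e1 : lambda * OPT k z S <= lambda * (m%:R * U) by rewrite ler_wpM2l.
have e2 : lambda * (m%:R * U) = m%:R * (lambda * U) by ring.
have e3 : m%:R * (lambda * U) <= m%:R * (L / 2) by rewrite ler_wpM2l.
have e4 : m%:R * (L / 2) = m%:R * L / 2 by ring.
lra.
Qed.

Theorem claim7p6 (R : realType) (d0 : measure_display) (Omega : measurableType d0)
  (P : probability Omega R) (n d k : nat) (lambda z beta xi : R)
  (M : ('I_n -> 'rV[R]_d) -> Omega -> 'I_k.+1 -> 'rV[R]_d) :
  (0 < k)%N -> 1 <= lambda -> 1 <= z -> 0 < beta <= 1 -> 1 <= xi ->
  (m_of k z xi <= n)%N ->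
  approx_alg P M lambda xi beta z ->
  weakly_accurate k (mech_tilde P M (m := m_of k z xi))
    ((160 * (2 * lambda) `^ (2 / z))^-1) (beta / k.+1%:R).
Proof.
move=> k0 hl hz /andP [hb0 hb1] hxi hmn happ.
split; first by rewrite /m_of dvdn_mulr.
move=> X hX.
set S := @embed_input R n _ d X.
have [_ [mM hG]] := happ S (fun i => @embed_ball R n _ d X i).
set A := [set q | exists t : 'I_k, strongly_agrees R k q X t]%classic.
set E := fun j : 'I_k.+1 => [set w | A (fun l => sgnb (M S w j 0 l))]%classic.
rewrite /mech_tilde -/S.
rewrite mulrC EFinM lee_pmul2l //.
have mE : forall j, measurable (E j).
  by move=> j; apply: (@meas_sgn R _ _ d (fun l w => M S w j 0 l)) => l; exact: mM.
set G := [set w | cost z (M S w) S <= lambda * OPT k z S + xi]%classic in hG.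
have mG : measurable G.
  have mc := @meas_cost R _ _ _ _ _ z (M S) S mM.
  have -> : G = (setT `&` ((fun w => cost z (M S w) S) @^-1` `]-oo, lambda * OPT k z S + xi]))%classic.
    by rewrite setTI preimage_itvNyc.
  exact: mc measurableT _ (measurable_itv _).
apply: le_trans hG _.
apply: le_trans (_ : P (\big[setU/set0]_(i < k.+1) E (inord i))%classic <= _)%E.
  apply: le_measure; rewrite ?inE //.
    by apply: bigsetU_measurable => i _; exact: mE.
  move=> w Gw.
  have [j [t ht]] := @det R _ _ _ _ _ _ X (M S w) k0 hl hz hxi hmn hX Gw.
  apply/in_bigsetU; exists j; split => //.
  by rewrite inord_val; exists t.
apply: le_trans (@Boole_inequality _ _ _ P (fun i : nat => E (inord i)) k.+1 _) _.
  by move=> i _; exact: mE.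
under eq_bigr do rewrite inord_val.
exact: lexx.
Qed.
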